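(* Let $f(\mathbf{x})=\mathbf{x}^{T}A\mathbf{x}+b^{T}\mathbf{x}+1$ with $A\in\mathbb{R}^{n\times n}$ symmetric and $b\in\mathbb{R}^n$. Then there exist real diagonal $2\times 2$ matrices $A_1,\dots,A_n$ with $f(\mathbf{x})=\det(I_2+x_1A_1+\dots+x_nA_n)$ if and only if $A-\frac14 bb^{T}$ is negative semidefinite and has rank at most $1$. *)

(* Defs.v *)
(* Real numbers are modelled by an arbitrary real closed field R : rcfType. *)
From HB Require Import structures.
From mathcomp Require Import all_boot all_order all_algebra.
Set Implicit Arguments. Unset Strict Implicit. Unset Printing Implicit Defensive.
Import Order.TTheory GRing.Theory Num.Theory.
Local Open Scope ring_scope.

Definition neg_semidef (R : numDomainType) (n : nat) (M : 'M[R]_n) : Prop :=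
  forall x : 'cV[R]_n, (x^T *m M *m x) 0 0 <= 0.

Definition quadf (R : comPzRingType) (n : nat) (A : 'M[R]_n) (b : 'cV[R]_n)
  (x : 'cV[R]_n) : R :=
  (x^T *m A *m x) 0 0 + (b^T *m x) 0 0 + 1.

(* Main.v *)
Require Import Defs.
From HB Require Import structures.
From mathcomp Require Import all_boot all_order all_algebra.
Import Order.TTheory GRing.Theory Num.Theory.
Local Open Scope ring_scope.

Lemma det2 (R : comNzRingType) (M : 'M[R]_2) : \det M = M 0 0 * M 1 1 - M 0 1 * M 1 0.
Proof.
rewrite (expand_det_row _ 0) !big_ord_recl big_ord0 /cofactor !det_mx11 !mxE /=.
rewrite addr0 expr0 expr1 !mul1r.
have E1 : lift 0 (0 : 'I_1) = 1 :> 'I_2 by apply/val_inj.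
have E2 : lift (lift ord0 ord0) (0 : 'I_1) = 0 :> 'I_2 by apply/val_inj.
have E3 : lift ord0 ord0 = 1 :> 'I_2 by apply/val_inj.
have E4 : ord0 = 0 :> 'I_2 by apply/val_inj.
rewrite E2 E1 mulN1r mulrN.
by [].
Qed.

Section Forms.
Variables (R : comNzRingType) (n : nat).
Implicit Types (N : 'M[R]_n) (x y u v : 'cV[R]_n).

Definition bf N x y := (x^T *m N *m y) 0 0.
Definition dot u x := (u^T *m x) 0 0.

Lemma bf_delta N i j : bf N (delta_mx i 0) (delta_mx j 0) = N i j.
Proof. by rewrite /bf trmx_delta -rowE -colE !mxE. Qed.

Lemma bfDl N x y z : bf N (x + y) z = bf N x z + bf N y z.
Proof. by rewrite /bf linearD /= !mulmxDl mxE. Qed.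

Lemma bfDr N x y z : bf N z (x + y) = bf N z x + bf N z y.
Proof. by rewrite /bf mulmxDr mxE. Qed.

Lemma bfZl N a x y : bf N (a *: x) y = a * bf N x y.
Proof. by rewrite /bf linearZ /= -!scalemxAl mxE. Qed.

Lemma bfZr N a x y : bf N x (a *: y) = a * bf N x y.
Proof. by rewrite /bf -scalemxAr mxE. Qed.

Lemma bfMB N1 N2 x y : bf (N1 - N2) x y = bf N1 x y - bf N2 x y.
Proof. by rewrite /bf mulmxBr mulmxBl !mxE. Qed.

Lemma bfMD N1 N2 x y : bf (N1 + N2) x y = bf N1 x y + bf N2 x y.
Proof. by rewrite /bf mulmxDr mulmxDl mxE. Qed.

Lemma bfMZ a N x y : bf (a *: N) x y = a * bf N x y.
Proof. by rewrite /bf -scalemxAr -scalemxAl mxE. Qed.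

Lemma dot_sym u x : dot u x = dot x u.
Proof.
by rewrite /dot -[in RHS](trmxK u) -trmx_mul [in RHS]mxE.
Qed.

Lemma bf_rank1 u v x y : bf (u *m v^T) x y = dot u x * dot v y.
Proof.
rewrite /bf mulmxA -mulmxA mxE big_ord1.
by rewrite [dot u x]dot_sym.
Qed.

Lemma bf_sym N x y : N^T = N -> bf N x y = bf N y x.
Proof.
move=> hN; rewrite /bf -[in RHS]hN.
by rewrite -[in RHS](trmxK x) -!trmx_mul [in RHS]mxE mulmxA.
Qed.

Lemma dotD u x y : dot u (x + y) = dot u x + dot u y.
Proof. by rewrite /dot mulmxDr mxE. Qed.
Lemma dotZ u a x : dot u (a *: x) = a * dot u x.
Proof. by rewrite /dot -scalemxAr mxE. Qed.
Lemma dotDl u v x : dot (u + v) x = dot u x + dot v x.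
Proof. by rewrite /dot linearD /= mulmxDl mxE. Qed.
Lemma dotBl u v x : dot (u - v) x = dot u x - dot v x.
Proof. by rewrite /dot linearB /= mulmxBl !mxE. Qed.
Lemma dotZl a u x : dot (a *: u) x = a * dot u x.
Proof. by rewrite /dot linearZ /= -scalemxAl mxE. Qed.

End Forms.
Arguments bf {R n}.
Arguments dot {R n}.

From mathcomp Require Import ring lra.

Lemma entry_rank1 (R : comNzRingType) n (u v : 'cV[R]_n) i j :
  (u *m v^T) i j = u i 0 * v j 0.
Proof. by rewrite mxE big_ord1 mxE. Qed.

Lemma polar (R : realFieldType) n (N : 'M[R]_n) :
  N^T = N -> (forall x, bf N x x = 0) -> N = 0.
Proof.
move=> hN H; apply/matrixP=> i j; rewrite [RHS]mxE.
have := H (delta_mx i 0 + delta_mx j 0).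
rewrite bfDl !bfDr !bf_delta.
have := H (delta_mx i 0); rewrite bf_delta => ->.
have := H (delta_mx j 0); rewrite bf_delta => ->.
have -> : N j i = N i j by rewrite -[in RHS]hN mxE.
move=> h; lra.
Qed.

Lemma rank1_decomp (R : fieldType) n r (U : 'M[R]_(n, r)) (V : 'M_(r, n)) :
  (r <= 1)%N -> exists u v : 'cV_n, U *m V = u *m v^T.
Proof.
case: r U V => [|[|r]] U V // _.
  by exists 0, 0; rewrite thinmx0 mul0mx mul0mx.
by exists U, V^T; rewrite trmxK.
Qed.

Lemma nsd_decomp (R : rcfType) n (u v : 'cV[R]_n) :
  (u *m v^T)^T = u *m v^T -> neg_semidef (u *m v^T) ->
  exists d : 'cV_n, u *m v^T = - (d *m d^T).
Proof.
move=> hS hN.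
have sym : forall i j, u i 0 * v j 0 = u j 0 * v i 0.
  by move=> i j; rewrite -!entry_rank1 -[in LHS]hS mxE.
case: (pickP (fun k : 'I_n => u k 0 != 0)) => [k /= uk | u0]; last first.
  exists 0; rewrite mul0mx oppr0; apply/matrixP => i j; rewrite entry_rank1 [RHS]mxE.
  by move/negbT: (u0 i); rewrite negbK => /eqP ->; rewrite mul0r.
set l := v k 0 / u k 0.
have vj : forall j, v j 0 = l * u j 0.
  by move=> j; rewrite /l mulrAC [v k 0 * _]mulrC sym mulrAC divff // mul1r.
have hkk : u k 0 * v k 0 <= 0.
  by have := hN (delta_mx k 0); rewrite -/(bf _ _ _) bf_delta entry_rank1.
have l0 : l <= 0.
  move: hkk; rewrite vj mulrCA -expr2 => h.
  have hp : 0 < u k 0 ^+ 2 by rewrite lt0r sqrf_eq0 uk sqr_ge0.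
  nra.
exists (Num.sqrt (- l) *: u); apply/matrixP => i j.
rewrite entry_rank1 [RHS]mxE entry_rank1 !mxE vj.
have hs : Num.sqrt (- l) ^+ 2 = - l by rewrite sqr_sqrtr // oppr_ge0.
move: hs; set s := Num.sqrt (- l) => hs.
transitivity (- (s ^+ 2) * (u i 0 * u j 0)); first by rewrite hs opprK; ring.
ring.
Qed.

Lemma det_diag_sum (R : comNzRingType) n (Ai : 'I_n -> 'M[R]_2)
  (hd : forall i, is_diag_mx (Ai i)) (x : 'cV[R]_n) :
  \det (1%:M + \sum_(i < n) x i 0 *: Ai i) =
  (1 + dot (\col_i Ai i 0 0) x) * (1 + dot (\col_i Ai i 1 1) x).
Proof.
rewrite det2.
have e : forall p q : 'I_2, (1%:M + \sum_(i < n) x i 0 *: Ai i) p q =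
   (p == q)%:R + \sum_(i < n) Ai i p q * x i 0.
  move=> p q; rewrite !mxE summxE; congr (_ + _); apply: eq_bigr => i _.
  by rewrite mxE mulrC.
have off : forall i, Ai i 0 1 = 0 by move=> i; apply/is_diag_mxP.
rewrite !e [X in _ - X](_ : _ = 0) ?subr0; last first.
  by rewrite big1 ?addr0 ?mul0r // => i _; rewrite off mul0r.
by rewrite /dot !mxE; congr ((_ + _) * (_ + _)); apply: eq_bigr => i _; rewrite !mxE.
Qed.

Lemma bfMN (R : comNzRingType) n (N : 'M[R]_n) x y : bf (- N) x y = - bf N x y.
Proof. by rewrite /bf mulmxN mulNmx !mxE. Qed.

Theorem mainTheorem3 (R : rcfType) (n : nat) (A : 'M[R]_n) (b : 'cV[R]_n)
  (hA : A^T = A) :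
  (exists Ai : 'I_n -> 'M[R]_2,
      (forall i, is_diag_mx (Ai i)) /\
      (forall x : 'cV[R]_n,
          quadf A b x = \det (1%:M + \sum_(i < n) x i 0 *: Ai i)))
  <-> (neg_semidef (A - 4^-1 *: (b *m b^T)) /\ leq (\rank (A - 4^-1 *: (b *m b^T))) 1).
Proof.
have symM : (A - 4^-1 *: (b *m b^T))^T = A - 4^-1 *: (b *m b^T).
  by rewrite linearB /= linearZ /= trmx_mul trmxK hA.
have qfM : forall x, bf (A - 4^-1 *: (b *m b^T)) x x = bf A x x - 4^-1 * dot b x ^+ 2.
  by move=> x; rewrite bfMB bfMZ bf_rank1 expr2.
split.
  move=> [Ai [hd hf]].
  set a : 'cV_n := \col_i Ai i 0 0; set c : 'cV_n := \col_i Ai i 1 1.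
  have hf' : forall x, bf A x x + dot b x + 1 = (1 + dot a x) * (1 + dot c x).
    by move=> x; rewrite -det_diag_sum // -hf.
  have hLQ : forall x, dot b x = dot a x + dot c x /\ bf A x x = dot a x * dot c x.
    move=> x; have h1 := hf' x; have h2 := hf' ((-1) *: x).
    move: h2; rewrite bfZl bfZr !dotZ => h2.
    split; nra.
  have qM : forall x, bf (A - 4^-1 *: (b *m b^T)) x x = - 4^-1 * dot (a - c) x ^+ 2.
    move=> x; rewrite qfM dotBl; have [h1 h2] := hLQ x; rewrite h1 h2; field; by rewrite ?pnatr_eq0.
  set D := (- 4^-1) *: ((a - c) *m (a - c)^T).
  have symD : D^T = D by rewrite /D linearZ /= trmx_mul trmxK.
  have hMD : A - 4^-1 *: (b *m b^T) = D.
    apply/eqP; rewrite -subr_eq0; apply/eqP; apply: polar.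
      by rewrite linearB /= symM symD.
    by move=> y; rewrite bfMB qM /D bfMZ bf_rank1 -expr2 subrr.
  split.
    by move=> x; rewrite -/(bf _ _ _) qM mulNr oppr_le0 mulr_ge0 ?invr_ge0 ?sqr_ge0 ?ler0n.
  rewrite hMD /D scalemxAl.
  exact: leq_trans (mxrankM_maxl _ _) (rank_leq_col _).
move=> [hN hr].
have [u [v huv]] := @rank1_decomp _ _ _ (col_base (A - 4^-1 *: (b *m b^T)))
   (row_base (A - 4^-1 *: (b *m b^T))) hr.
rewrite mulmx_base in huv.
have [d hd] : exists d : 'cV_n, u *m v^T = - (d *m d^T).
  by apply: nsd_decomp; rewrite -huv.
set a : 'cV_n := 2^-1 *: b + d; set c : 'cV_n := 2^-1 *: b - d.
exists (fun i => diag_mx (\row_(p < 2) (if p == 0 then a i 0 else c i 0))).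
split; first by move=> i; exact: diag_mx_is_diag.
move=> x; rewrite det_diag_sum; last by move=> i; exact: diag_mx_is_diag.
have -> : \col_i (diag_mx (\row_(p < 2) (if p == 0 then a i 0 else c i 0))) 0 0 = a.
  by apply/matrixP => i j; rewrite !mxE /= !ord1.
have -> : \col_i (diag_mx (\row_(p < 2) (if p == 0 then a i 0 else c i 0))) 1 1 = c.
  by apply/matrixP => i j; rewrite !mxE /= !ord1.
have hAe : A = (A - 4^-1 *: (b *m b^T)) + 4^-1 *: (b *m b^T) by rewrite subrK.
rewrite /quadf -/(bf _ _ _) -/(dot _ _) hAe bfMD huv hd bfMN bfMZ !bf_rank1.
rewrite /a /c dotDl dotBl !dotZl.
field; by rewrite ?pnatr_eq0.
Qed.
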